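(* Let $\mathcal{F}=(X,\leq)$ be a poset and $j$ a nucleus on $\mathit{Up}(\mathcal{F})$. Let $I^{\mathcal{F},j}$ be a nuclear interpretation on $(\mathcal{F},j)$ that is consistent with $\vdash_\mathsf{IPC}$. Then $I^{\mathcal{F},j}=I^{\mathcal{F},j}_{\mathrm{st}}$, i.e. for all $j$-fixed upsets $U,V$: $I^{\mathcal{F},j}(\bot)=j\emptyset$, $I^{\mathcal{F},j}(\land)(U,V)=U\cap V$, $I^{\mathcal{F},j}(\lor)(U,V)=j(U\cup V)$, and $I^{\mathcal{F},j}(\to)(U,V)=\{x\in X: {\uparrow}x\cap U\subseteq V\}$.
   Context: The propositional language is generated by $\varphi ::= p \mid \bot \mid \varphi\land\varphi\mid\varphi\lor\varphi\mid\varphi\to\varphi$ with $p$ ranging over a countably infinite set $\mathit{Prop}$ of propositional variables; $\vdash_\mathsf{IPC}$ is the usual single-conclusion consequence relation of intuitionistic propositional logic (premises form a set, possibly empty). For a poset $\mathcal{F}=(X,\leq)$, $\mathit{Up}(\mathcal{F})$ is the set of upward closed subsets of $X$, and ${\uparrow}x=\{y: x\leq y\}$. A nucleus on $\mathit{Up}(\mathcal{F})$ is a map $j:\mathit{Up}(\mathcal{F})\to\mathit{Up}(\mathcal{F})$ with $U\subseteq jU$, $jjU\subseteq jU$, and $j(U\cap V)=jU\cap jV$ for all upsets $U,V$; $U$ is fixed if $jU=U$. A nuclear interpretation $I^{\mathcal{F},j}$ assigns to $\bot$ a fixed upset and to each of $\land,\lor,\to$ a binary function mapping pairs of fixed upsets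 to fixed upsets. A valuation is any map $v:\mathit{Prop}\to\mathit{Up}(\mathcal{F})$; semantic values are defined compositionally by $[\![p]\!]_v=j(v(p))$ and $[\![\#(\varphi_1,\dots,\varphi_n)]\!]_v=I^{\mathcal{F},j}(\#)([\![\varphi_1]\!]_v,\dots,[\![\varphi_n]\!]_v)$ (so all semantic values are fixed upsets). The interpretation is consistent with a consequence relation $\vdash$ if whenever $\Gamma\vdash\varphi$, for every valuation $v$, $\bigcap_{\psi\in\Gamma}[\![\psi]\!]_v\subseteq[\![\varphi]\!]_v$, where $\bigcap\emptyset=X$. The standard nuclear interpretation $I^{\mathcal{F},j}_{\mathrm{st}}$ is the one given by the formulas in the claim. *)

(* Defs.v *)
Set Implicit Arguments.

Inductive form : Type :=
| Var : nat -> form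
| Bot : form
| And : form -> form -> form
| Or  : form -> form -> form
| Imp : form -> form -> form.

Inductive ipc_axiom : form -> Prop :=
| AxK  : forall A B, ipc_axiom (Imp A (Imp B A))
| AxS  : forall A B C, ipc_axiom (Imp (Imp A (Imp B C)) (Imp (Imp A B) (Imp A C)))
| AxAndE1 : forall A B, ipc_axiom (Imp (And A B) A)
| AxAndE2 : forall A B, ipc_axiom (Imp (And A B) B)
| AxAndI  : forall A B, ipc_axiom (Imp A (Imp B (And A B)))
| AxOrI1  : forall A B, ipc_axiom (Imp A (Or A B))
| AxOrI2  : forall A B, ipc_axiom (Imp B (Or A B))
| AxOrE   : forall A B C, ipc_axiom (Imp (Imp A C) (Imp (Imp B C) (Imp (Or A B) C)))
| AxEFQ   : forall A, ipc_axiom (Imp Bot A).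

Inductive ipc_derives (Gamma : form -> Prop) : form -> Prop :=
| d_ax  : forall A, ipc_axiom A -> ipc_derives Gamma A
| d_hyp : forall A, Gamma A -> ipc_derives Gamma A
| d_mp  : forall A B, ipc_derives Gamma (Imp A B) -> ipc_derives Gamma A ->
          ipc_derives Gamma B.

Section Semantics.
Variables (X : Type) (le : X -> X -> Prop).

Definition is_poset : Prop :=
  (forall x, le x x) /\
  (forall x y z, le x y -> le y z -> le x z) /\
  (forall x y, le x y -> le y x -> x = y).

Definition subset (U V : X -> Prop) : Prop := forall x, U x -> V x.
Definition cap (U V : X -> Prop) : X -> Prop := fun x => U x /\ V x.
Definition cup (U V : X -> Prop) : X -> Prop := fun x => U x \/ V x.
Definition empty : X -> Prop := fun _ => False.
Definition up (x : X) : X -> Prop := fun y => le x y.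

Definition upset (U : X -> Prop) : Prop := forall x y, le x y -> U x -> U y.

(** a nucleus on Up(F) (only its behaviour on upsets matters) *)
Definition nucleus (j : (X -> Prop) -> (X -> Prop)) : Prop :=
  (forall U, upset U -> upset (j U)) /\
  (forall U, upset U -> subset U (j U)) /\
  (forall U, upset U -> subset (j (j U)) (j U)) /\
  (forall U V, upset U -> upset V -> j (cap U V) = cap (j U) (j V)).

Definition fixed (j : (X -> Prop) -> (X -> Prop)) (U : X -> Prop) : Prop :=
  upset U /\ j U = U.

Record interp := Interp {
  I_bot : X -> Prop;
  I_and : (X -> Prop) -> (X -> Prop) -> (X -> Prop);
  I_or  : (X -> Prop) -> (X -> Prop) -> (X -> Prop);
  I_imp : (X -> Prop) -> (X -> Prop) -> (X -> Prop) }.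

Definition nuclear_interp (j : (X -> Prop) -> (X -> Prop)) (I : interp) : Prop :=
  fixed j (I_bot I) /\
  (forall U V, fixed j U -> fixed j V -> fixed j (I_and I U V)) /\
  (forall U V, fixed j U -> fixed j V -> fixed j (I_or I U V)) /\
  (forall U V, fixed j U -> fixed j V -> fixed j (I_imp I U V)).

Fixpoint sem (j : (X -> Prop) -> (X -> Prop)) (I : interp)
    (v : nat -> (X -> Prop)) (phi : form) : X -> Prop :=
  match phi with
  | Var p => j (v p)
  | Bot => I_bot I
  | And a b => I_and I (sem j I v a) (sem j I v b)
  | Or a b => I_or I (sem j I v a) (sem j I v b)
  | Imp a b => I_imp I (sem j I v a) (sem j I v b)
  end.

Definition valuation (v : nat -> (X -> Prop)) : Prop := forall p, upset (v p).

(** consistency with IPC: Gamma |- phi implies /\Gamma ⊆ [[phi]] for all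
    valuations (the empty intersection being X) *)
Definition consistent_IPC (j : (X -> Prop) -> (X -> Prop)) (I : interp) : Prop :=
  forall (Gamma : form -> Prop) (phi : form), ipc_derives Gamma phi ->
  forall v, valuation v ->
  forall x, (forall psi, Gamma psi -> sem j I v psi x) -> sem j I v phi x.

Definition heyting_imp (U V : X -> Prop) : X -> Prop :=
  fun x => subset (cap (up x) U) V.

End Semantics.

(* Main.v *)
Require Import Defs.
From Stdlib Require Import FunctionalExtensionality PropExtensionality.

Lemma set_ext {X : Type} (U V : X -> Prop) : (forall x, U x <-> V x) -> U = V.
Proof. intro H. apply functional_extensionality; intro x. apply propositional_extensionality. auto. Qed.

Lemma ded (Gamma : form -> Prop) A B :
  ipc_derives (fun f => Gamma f \/ f = A) B -> ipc_derives Gamma (Imp A B).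
Proof.
  induction 1 as [C HC | C HC | C D _ IH1 _ IH2].
  - eapply d_mp. apply d_ax, AxK. now apply d_ax.
  - destruct HC as [HC | ->].
    + eapply d_mp. apply d_ax, AxK. now apply d_hyp.
    + eapply d_mp. eapply d_mp. apply d_ax, (AxS A (Imp A A) A).
      apply d_ax, AxK. apply d_ax, (AxK A A).
  - eapply d_mp. eapply d_mp. apply d_ax, AxS. exact IH1. exact IH2.
Qed.

Definition val3 {X : Type} (U V W : X -> Prop) : nat -> X -> Prop :=
  fun n => match n with 0 => U | 1 => V | _ => W end.

Theorem theorem2 (X : Type) (le : X -> X -> Prop)
  (j : (X -> Prop) -> (X -> Prop)) (I : interp X) :
  is_poset le -> nucleus le j -> nuclear_interp le j I -> consistent_IPC le j I ->
  I_bot I = j (@empty X) /\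
  (forall U V, fixed le j U -> fixed le j V ->
     I_and I U V = cap U V /\
     I_or I U V = j (cup U V) /\
     I_imp I U V = heyting_imp le U V).
Proof.
  intros [Hrefl [Htrans _]] [Hnup [Hninf [Hnidem Hncap]]] [Hbot [Hand [Hor Himp]]] Hc.
  assert (jmono : forall U V, upset le U -> upset le V -> subset U V -> subset (j U) (j V)).
  { intros U V HU HV HUV x Hx.
    assert (E : cap U V = U) by (apply set_ext; intro y; unfold cap; split; [tauto|auto]).
    rewrite <- E, Hncap in Hx by assumption. exact (proj2 Hx). }
  assert (jj : forall U, upset le U -> j (j U) = j U).
  { intros U HU. apply set_ext; intro x; split; [apply Hnidem; auto|].
    apply Hninf. auto. }
  assert (val3_ok : forall U V W, upset le U -> upset le V -> upset le W ->
     valuation le (val3 U V W)).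
  { intros U V W HU HV HW [|[|n]]; simpl; auto. }
  assert (semfix : forall v, valuation le v -> forall phi, fixed le j (sem j I v phi)).
  { intros v Hv phi; induction phi; simpl; auto.
    split; [apply Hnup, Hv| apply jj, Hv]. }
  assert (upempty : upset le (@empty X)) by (intros a b _ []).
  split.
  { apply set_ext; intro x; split.
    - intro Hx.
      refine (Hc (fun f => f = Bot) (Var 0) _ (fun _ => @empty X) (fun _ => upempty) x _).
      + eapply d_mp. apply d_ax, AxEFQ. now apply d_hyp.
      + intros psi ->. exact Hx.
    - intro Hx. destruct Hbot as [Hb1 Hb2]. rewrite <- Hb2.
      refine (jmono _ _ upempty Hb1 _ x Hx). intros _ []. }
  assert (HA : forall U V, fixed le j U -> fixed le j V -> I_and I U V = cap U V).
  { intros U V [HU1 HU2] [HV1 HV2]. apply set_ext; intro x; split.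
    - intro Hx; split.
      + pose proof (Hc (fun f => f = And (Var 0) (Var 1)) (Var 0) ltac:(eapply d_mp; [apply d_ax, AxAndE1| now apply d_hyp]) (val3 U V U) (val3_ok _ _ _ HU1 HV1 HU1) x) as H.
        cbn [sem val3] in H. rewrite HU2 in H. apply H.
        intros psi ->. cbn [sem val3]. rewrite HU2, HV2. exact Hx.
      + pose proof (Hc (fun f => f = And (Var 0) (Var 1)) (Var 1) ltac:(eapply d_mp; [apply d_ax, AxAndE2| now apply d_hyp]) (val3 U V U) (val3_ok _ _ _ HU1 HV1 HU1) x) as H.
        cbn [sem val3] in H. rewrite HV2 in H. apply H.
        intros psi ->. cbn [sem val3]. rewrite HU2, HV2. exact Hx.
    - intros [Hx1 Hx2].
      pose proof (Hc (fun f => f = Var 0 \/ f = Var 1) (And (Var 0) (Var 1)) ltac:(eapply d_mp; [eapply d_mp; [apply d_ax, AxAndI| apply d_hyp; now left] | apply d_hyp; now right]) (val3 U V U) (val3_ok _ _ _ HU1 HV1 HU1) x) as H.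
      cbn [sem val3] in H. rewrite HU2, HV2 in H.
      apply H.
      intros psi [-> | ->]; cbn [sem val3]; [rewrite HU2|rewrite HV2]; assumption. }
  assert (HI : forall U V, fixed le j U -> fixed le j V -> I_imp I U V = heyting_imp le U V).
  { intros U V [HU1 HU2] [HV1 HV2]. apply set_ext; intro x; split.
    - intros Hx y [Hxy HyU].
      assert (Hy : I_imp I U V y) by (apply (proj1 (Himp U V (conj HU1 HU2) (conj HV1 HV2)) x); auto).
      pose proof (Hc (fun f => f = Imp (Var 0) (Var 1) \/ f = Var 0) (Var 1) ltac:(eapply d_mp; [apply d_hyp; now left | apply d_hyp; now right]) (val3 U V U) (val3_ok _ _ _ HU1 HV1 HU1) y) as H.
      cbn [sem val3] in H. rewrite HV2 in H.
      apply H.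
      intros psi [-> | ->]; cbn [sem val3]; rewrite ?HU2, ?HV2; assumption.
    - intro Hx.
      set (W := up le x).
      assert (HW : upset le W) by (intros a b Hab Ha; unfold W, up in *; eauto).
      assert (HjW : fixed le j (j W)) by (split; [apply Hnup, HW| apply jj, HW]).
      assert (HxW : j W x) by (apply Hninf; [exact HW| apply Hrefl]).
      set (A := I_and I U (j W)).
      assert (HAf : fixed le j A) by (apply Hand; auto; split; auto).
      assert (HAe : A = cap U (j W)) by (apply HA; auto; split; auto).
      assert (HAV : subset A V).
      { rewrite HAe. intros y [HyU HyW]. rewrite <- HV2.
        rewrite <- HU2 in HyU. assert (Hc2 : cap (j W) (j U) y) by (split; auto).
        rewrite <- Hncap in Hc2 by auto.
        refine (jmono _ _ _ HV1 _ y Hc2).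
        - intros a b Hab [Ha1 Ha2]; split; eauto.
        - intros z [Hz1 Hz2]. apply Hx. split; auto. }
      assert (HAA : I_and I A V = A).
      { rewrite HA by (auto; split; auto). apply set_ext; intro y; unfold cap; split; [tauto|].
        intro; split; auto. }
      assert (H1 : I_imp I U A x).
      { pose proof (Hc (fun f => f = Var 2) (Imp (Var 0) (And (Var 0) (Var 2))) ltac:(apply ded; eapply d_mp; [eapply d_mp; [apply d_ax, AxAndI| apply d_hyp; now right] | apply d_hyp; left; reflexivity]) (val3 U V W) (val3_ok _ _ _ HU1 HV1 HW) x) as H.
        cbn [sem val3] in H. rewrite HU2 in H.
        apply H.
        intros psi ->. exact HxW. }
      pose proof (Hc (fun f => f = Imp (Var 0) (And (And (Var 0) (Var 2)) (Var 1))) (Imp (Var 0) (Var 1)) ltac:(apply ded; eapply d_mp; [apply d_ax, AxAndE2| eapply d_mp; [apply d_hyp; left; reflexivity| apply d_hyp; now right]]) (val3 U V W) (val3_ok _ _ _ HU1 HV1 HW) x) as H.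
      cbn [sem val3] in H. rewrite HU2, HV2 in H.
      apply H.
      intros psi ->. cbn [sem val3]. rewrite HU2, HV2. fold A. rewrite HAA. exact H1. }
  intros U V HUf HVf. split; [now apply HA|]. split; [|now apply HI].
  destruct HUf as [HU1 HU2], HVf as [HV1 HV2].
  assert (Hcup : upset le (cup U V)) by (intros a b Hab [Ha|Ha]; [left|right]; eauto).
  assert (HJ : fixed le j (j (cup U V))) by (split; [apply Hnup, Hcup| apply jj, Hcup]).
  destruct (Hor U V (conj HU1 HU2) (conj HV1 HV2)) as [HO1 HO2].
  apply set_ext; intro x; split.
  - intro Hx.
    pose proof (Hc (fun f => f = Imp (Var 0) (Var 2) \/ f = Imp (Var 1) (Var 2) \/ f = Or (Var 0) (Var 1)) (Var 2) ltac:(eapply d_mp; [eapply d_mp; [eapply d_mp; [apply d_ax, AxOrE| apply d_hyp; now left]| apply d_hyp; right; now left]| apply d_hyp; right; now right]) (val3 U V (cup U V)) (val3_ok _ _ _ HU1 HV1 Hcup) x) as H.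
    cbn [sem val3] in H. apply H.
    intros psi [-> | [-> | ->]]; cbn [sem val3]; rewrite ?HU2, ?HV2; auto.
    + rewrite HI by (auto; split; auto). intros y [_ Hy]. apply Hninf; auto. now left.
    + rewrite HI by (auto; split; auto). intros y [_ Hy]. apply Hninf; auto. now right.
  - intro Hx. rewrite <- HO2. refine (jmono _ _ Hcup HO1 _ x Hx).
    intros y [Hy|Hy].
    + pose proof (Hc (fun f => f = Var 0) (Or (Var 0) (Var 1)) ltac:(eapply d_mp; [apply d_ax, AxOrI1| now apply d_hyp]) (val3 U V U) (val3_ok _ _ _ HU1 HV1 HU1) y) as H.
      cbn [sem val3] in H. rewrite HU2, HV2 in H.
      apply H.
      intros psi ->. cbn [sem val3]. rewrite HU2. exact Hy.
    + pose proof (Hc (fun f => f = Var 1) (Or (Var 0) (Var 1)) ltac:(eapply d_mp; [apply d_ax, AxOrI2| now apply d_hyp]) (val3 U V U) (val3_ok _ _ _ HU1 HV1 HU1) y) as H.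
      cbn [sem val3] in H. rewrite HU2, HV2 in H.
      apply H.
      intros psi ->. cbn [sem val3]. rewrite HV2. exact Hy.
Qed.
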